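(* Assume (A1)–(A3), $\alpha>1$, $\mu>0$, $LR_{target}>0$, and $\rho<\ln(10)\,LR_{target}\,\mu$, with $c_{opt},\rho,T_{bc,opt},AUC_{bc,opt}$ as defined below, and let $T_{opt}=\frac{\ln(10)LR_{target}}{k(c_{opt})-r}$, $AUC_{opt}=T_{opt}c_{opt}$, $\tau=\ln(2)/\mu$. Then $$T_{opt}-T_{bc,opt}=\frac{\tau}{\ln 2}\cdot\frac{\rho}{k(c_{opt})-r},\qquad 0<T_{opt}-T_{bc,opt}\le\frac{\tau}{\ln 2}\left(1-\frac{zMIC}{c_{opt}}\right),$$ and $$AUC_{bc,opt}-AUC_{opt}=\frac{\tau}{\ln 2}\left(1-\frac{\rho}{k(c_{opt})-r}\right)c_{opt}\ \ge\ \frac{\tau}{\ln 2}\,zMIC.$$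
   Context: Let $r>0$ and let $k:[0,\infty)\to[0,\infty)$ satisfy: (A1) $k(0)=0$, $k$ is continuous and strictly increasing on $[0,\infty)$, and twice differentiable on $(0,\infty)$; (A2) $\lim_{c\to\infty}k(c)=k_{max}<\infty$; (A3) either (i) (concave case) $k''(c)<0$ for all $c>0$, or (ii) (sigmoidal case) there is $c_{infl}>0$ with $k''(c)>0$ for $0<c<c_{infl}$ and $k''(c)<0$ for $c>c_{infl}$. Set $\alpha=k_{max}/r$; $zMIC$ is the unique $c>0$ with $k(c)=r$; $c_{opt}$ is the unique solution in $(0,\infty)$ of $k'(c)=\frac{k(c)-r}{c}$ (the maximizer of $(k(c)-r)/c$); $\rho=\int_{zMIC}^{c_{opt}}\frac{k(u)-r}{u}du$; $T_{bc,opt}=\frac{\ln(10)LR_{target}-\mu^{-1}\rho}{k(c_{opt})-r}$; $AUC_{bc,opt}=\left[\mu^{-1}+T_{bc,opt}\right]c_{opt}$. *)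

(* Defs.v *)
From Stdlib Require Import Reals.
From Coquelicot Require Import Coquelicot.
Open Scope R_scope.

Definition assumption_A1 (k : R -> R) : Prop :=
  k 0 = 0 /\
  (forall c, 0 <= c -> 0 <= k c) /\
  (forall c, 0 <= c ->
     filterlim k (within (fun x => 0 <= x) (locally c)) (locally (k c))) /\
  (forall x y, 0 <= x -> x < y -> k x < k y) /\
  (forall c, 0 < c -> ex_derive k c /\ ex_derive (Derive k) c).

Definition assumption_A2 (k : R -> R) (kmax : R) : Prop :=
  is_lim k p_infty kmax.

Definition assumption_A3 (k : R -> R) : Prop :=
  (forall c, 0 < c -> Derive (Derive k) c < 0) \/
  (exists c_infl, 0 < c_infl /\
     (forall c, 0 < c < c_infl -> 0 < Derive (Derive k) c) /\
     (forall c, c_infl < c -> Derive (Derive k) c < 0)).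

Definition rho (k : R -> R) (r zMIC c_opt : R) : R :=
  RInt (fun u => (k u - r) / u) zMIC c_opt.

Definition T_bc_opt (k : R -> R) (r zMIC c_opt mu LR : R) : R :=
  (ln 10 * LR - / mu * rho k r zMIC c_opt) / (k c_opt - r).

Definition AUC_bc_opt (k : R -> R) (r zMIC c_opt mu LR : R) : R :=
  (/ mu + T_bc_opt k r zMIC c_opt mu LR) * c_opt.

Definition T_opt (k : R -> R) (r c_opt LR : R) : R :=
  ln 10 * LR / (k c_opt - r).

Definition AUC_opt (k : R -> R) (r c_opt LR : R) : R :=
  T_opt k r c_opt LR * c_opt.

Definition tau (mu : R) : R := ln 2 / mu.

(* Main.v *)
Require Import Defs.
From Stdlib Require Import Reals Lra.
From Coquelicot Require Import Coquelicot.
Open Scope R_scope.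
Lemma g_der (k : R -> R) r c : 0 < c -> ex_derive k c ->
  is_derive (fun u => (k u - r) / u) c ((Derive k c * c - (k c - r)) / (c * c)).
Proof. intros Hc Hd. auto_derive. split; [exact Hd| split;[lra|exact I]].
change (fun x => k x) with k. field; lra. Qed.
Lemma lim_bound (k : R -> R) (kmax : R) : is_lim k p_infty kmax -> exists M, forall y, M < y -> k y < kmax + 1.
Proof. intros H. apply is_lim_spec in H. unfold is_lim' in H. destruct (H (mkposreal 1 Rlt_0_1)) as [M HM].
exists M. intros y Hy. specialize (HM y Hy). simpl in HM. apply Rabs_def2 in HM. lra. Qed.
Lemma crit (k : R -> R) r a b c : 0 < a -> a < c -> c < b -> ex_derive k c ->
  (forall x, a < x < b -> (k x - r)/x <= (k c - r)/c) -> Derive k c = (k c - r)/c.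
Proof. intros Ha Hac Hcb Hd Hm.
assert (Hc: 0 < c) by lra.
pose proof (g_der k r c Hc Hd) as G. apply is_derive_Reals in G.
assert (pr : derivable_pt (fun u => (k u - r)/u) c) by (exists ((Derive k c * c - (k c - r)) / (c * c)); exact G).
pose proof (deriv_maximum _ a b c pr Hac Hcb (fun x h1 h2 => Hm x (conj h1 h2))) as Z.
rewrite (derive_pt_eq_0 _ _ _ pr G) in Z.
assert (Hcc: c * c <> 0) by nra.
assert (Derive k c * c - (k c - r) = 0).
{ apply (Rmult_eq_reg_r (/ (c*c))). rewrite Rmult_0_l. exact Z. apply Rinv_neq_0_compat; exact Hcc. }
field_simplify_eq; lra. Qed.

Lemma g_cont (k : R -> R) r c : 0 < c -> ex_derive k c -> continuous (fun u => (k u - r) / u) c.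
Proof. intros Hc Hd. apply (ex_derive_continuous (K:=R_AbsRing) (V:=R_NormedModule)). eexists. apply (g_der k r c Hc Hd). Qed.

Theorem mainTheorem9
  (k : R -> R) (r kmax zMIC c_opt mu LR : R)
  (Hr : 0 < r)
  (HA1 : assumption_A1 k) (HA2 : assumption_A2 k kmax) (HA3 : assumption_A3 k)
  (Halpha : kmax / r > 1)
  (HzMIC_pos : 0 < zMIC) (HzMIC : k zMIC = r)
  (HzMIC_uniq : forall c, 0 < c -> k c = r -> c = zMIC)
  (Hcopt_pos : 0 < c_opt)
  (Hcopt : Derive k c_opt = (k c_opt - r) / c_opt)
  (Hcopt_uniq : forall c, 0 < c -> Derive k c = (k c - r) / c -> c = c_opt)
  (Hmu : 0 < mu) (HLR : 0 < LR)
  (Hrho : rho k r zMIC c_opt < ln 10 * LR * mu) :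
  let Topt := T_opt k r c_opt LR in
  let Tbc := T_bc_opt k r zMIC c_opt mu LR in
  let AUCopt := AUC_opt k r c_opt LR in
  let AUCbc := AUC_bc_opt k r zMIC c_opt mu LR in
  let rh := rho k r zMIC c_opt in
  Topt - Tbc = tau mu / ln 2 * (rh / (k c_opt - r)) /\
  0 < Topt - Tbc /\
  Topt - Tbc <= tau mu / ln 2 * (1 - zMIC / c_opt) /\
  AUCbc - AUCopt = tau mu / ln 2 * (1 - rh / (k c_opt - r)) * c_opt /\
  tau mu / ln 2 * (1 - rh / (k c_opt - r)) * c_opt >= tau mu / ln 2 * zMIC.
Proof.
destruct HA1 as [_ [_ [_ [Hmono Hder]]]].
set (g := fun u => (k u - r) / u).
assert (Hgpos : forall u, zMIC < u -> 0 < g u).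
{ intros u Hu. unfold g. assert (k zMIC < k u) by (apply Hmono; lra).
  apply Rdiv_lt_0_compat; lra. }
assert (Hgc : forall u, 0 < u -> continuity_pt g u).
{ intros u Hu. apply continuity_pt_filterlim. apply g_cont; [exact Hu| apply Hder; exact Hu]. }
destruct (lim_bound k kmax HA2) as [M0 HM0].
set (u1 := zMIC + 1).
assert (Hg1 : 0 < g u1) by (apply Hgpos; unfold u1; lra).
set (B := kmax + 1 - r).
set (M := Rmax (Rmax (M0 + 1) (u1 + 1)) (Rabs B / g u1 + 1)).
assert (HM1 : M0 + 1 <= M) by (unfold M; eapply Rle_trans; [apply Rmax_l|apply Rmax_l]).
assert (HM2 : u1 + 1 <= M) by (unfold M; eapply Rle_trans; [apply Rmax_r|apply Rmax_l]).
assert (HM3 : Rabs B / g u1 + 1 <= M) by (unfold M; apply Rmax_r).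
assert (HgM : g M < g u1).
{ unfold g. assert (k M < kmax + 1) by (apply HM0; lra).
  assert (HMp : 0 < M) by (unfold u1 in HM2; lra).
  assert (Rabs B < M * g u1).
  { assert (Rabs B / g u1 < M) by lra.
    apply (Rmult_lt_compat_r (g u1)) in H0; [|exact Hg1].
    unfold Rdiv in H0. rewrite Rmult_assoc, Rinv_l in H0 by lra. lra. }
  assert (B <= Rabs B) by apply Rle_abs.
  apply (Rmult_lt_reg_r M); [exact HMp|].
  replace ((k M - r) / M * M) with (k M - r) by (field; lra). unfold B in *. change ((k u1 - r) / u1) with (g u1). lra. }
destruct (continuity_ab_maj g zMIC M) as [Mx [HMx HMxI]].
{ unfold u1 in HM2; lra. }
{ intros c Hc. apply Hgc. lra. }
assert (HzM : zMIC < Mx).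
{ destruct (Rle_lt_or_eq_dec zMIC Mx (proj1 HMxI)) as [h|h]; [exact h|].
  subst Mx. pose proof (HMx u1 ltac:(unfold u1 in *; lra)).
  unfold g at 2 in H. rewrite HzMIC in H. unfold Rminus in H. rewrite Rplus_opp_r in H.
  unfold Rdiv in H. rewrite Rmult_0_l in H. lra. }
assert (HMM : Mx < M).
{ destruct (Rle_lt_or_eq_dec Mx M (proj2 HMxI)) as [h|h]; [exact h|].
  subst Mx. pose proof (HMx u1 ltac:(unfold u1 in *; lra)). lra. }
assert (Heq : Mx = c_opt).
{ apply Hcopt_uniq; [lra|]. apply (crit k r zMIC M); try lra. apply Hder; lra.
  intros x Hx. apply (HMx x). lra. }
subst Mx.
set (D := k c_opt - r).
assert (HD : 0 < D) by (unfold D; assert (k zMIC < k c_opt) by (apply Hmono; lra); lra).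
assert (Hcont : forall x, zMIC <= x <= c_opt -> continuous g x).
{ intros x Hx. apply g_cont; [lra| apply Hder; lra]. }
assert (Hrp : 0 < rho k r zMIC c_opt).
{ apply RInt_gt_0; [exact HzM| |exact Hcont]. intros x Hx. apply Hgpos. lra. }
assert (Hrb : rho k r zMIC c_opt <= (c_opt - zMIC) * (D / c_opt)).
{ unfold rho. fold g.
  replace ((c_opt - zMIC) * (D / c_opt)) with (RInt (fun _ => D / c_opt) zMIC c_opt).
  2:{ rewrite RInt_const. reflexivity. }
  apply RInt_le; [lra| | apply ex_RInt_const |].
  - apply (ex_RInt_continuous (V:=R_CompleteNormedModule)). intros z Hz. rewrite Rmin_left in Hz by lra.
    rewrite Rmax_right in Hz by lra. apply Hcont; exact Hz.
  - intros x Hx. apply (HMx x). lra. }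
assert (Hl2 : 0 < ln 2) by (rewrite <- ln_1; apply ln_increasing; lra).
assert (Ht : tau mu / ln 2 = / mu) by (unfold tau; field; lra).
intros Topt Tbc AUCopt AUCbc rh.
assert (E1 : Topt - Tbc = / mu * (rh / D)).
{ unfold Topt, Tbc, T_opt, T_bc_opt, rh. fold D. field. lra. }
assert (Hq : rh / D <= 1 - zMIC / c_opt).
{ unfold rh. apply (Rmult_le_reg_r D); [exact HD|].
  unfold Rdiv at 1. rewrite Rmult_assoc, Rinv_l by lra.
  replace ((1 - zMIC / c_opt) * D) with ((c_opt - zMIC) * (D / c_opt)) by (field; lra). lra. }
assert (Hq0 : 0 < rh / D) by (apply Rdiv_lt_0_compat; [exact Hrp|exact HD]).
rewrite Ht. fold D. split; [exact E1|]. split.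
{ rewrite E1. apply Rmult_lt_0_compat; [apply Rinv_0_lt_compat; lra| exact Hq0]. }
split. { rewrite E1. apply Rmult_le_compat_l; [left; apply Rinv_0_lt_compat; lra| exact Hq]. }
split.
{ unfold AUCbc, AUCopt, AUC_bc_opt, AUC_opt. fold Tbc. fold Topt.
  replace ((/ mu + Tbc) * c_opt - Topt * c_opt) with ((/ mu - (Topt - Tbc)) * c_opt) by ring.
  rewrite E1. ring. }
apply Rle_ge. rewrite Rmult_assoc. apply Rmult_le_compat_l; [left; apply Rinv_0_lt_compat; lra|].
assert (Hq2 : zMIC / c_opt <= 1 - rh / D) by lra.
apply (Rmult_le_compat_r c_opt) in Hq2; [|lra].
assert (EE: zMIC / c_opt * c_opt = zMIC). { unfold Rdiv. rewrite Rmult_assoc, Rinv_l by lra. ring. }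
rewrite EE in Hq2. exact Hq2.
Qed.
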